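(* Let $w_k^A,w_k^B$ be the noise vectors associated with SDQ (see context), under the assumptions that rewards satisfy $|r(s,a,s')|\le1$, $\|Q_0^A\|_\infty,\|Q_0^B\|_\infty\le1$, $d(s,a)>0$ for all $(s,a)$, and constant $\alpha\in(0,1)$. Let $Q_k^{\mathrm{err}_{UL}}$ be defined by \[ Q_{k+1}^{\mathrm{err}_{UL}}=(I+\alpha\gamma DP\Pi_{Q^*}-\alpha D)Q_k^{\mathrm{err}_{UL}}+\alpha w_k^A-\alpha w_k^B \] from a deterministic initial vector $Q_0^{\mathrm{err}_{UL}}\in\mathbb{R}^{|\mathcal{S}||\mathcal{A}|}$. With $d_{\min}=\min_{(s,a)}d(s,a)$ and $\rho=1-\alpha d_{\min}(1-\gamma)$, for every $k\ge0$, \[ \mathbb{E}\big[\|Q_k^{\mathrm{err}_{UL}}\|_2\big]\le\frac{4\alpha^{1/2}|\mathcal{S}\times\mathcal{A}|}{d_{\min}^{1/2}(1-\gamma)^{3/2}}+|\mathcal{S}\times\mathcal{A}|\,\|Q_0^{\mathrm{err}_{UL}}\|_2\,\rho^k. \]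
   Context: Finite MDP with states $\mathcal{S}=\{1,\dots,|\mathcal{S}|\}$, actions $\mathcal{A}=\{1,\dots,|\mathcal{A}|\}$, transitions $P(s'|s,a)$, deterministic reward $r(s,a,s')$ with $|r|\le1$, discount $\gamma\in(0,1)$, optimal action-value function $Q^*$; the MDP is assumed ergodic. Sampling distribution $d(s,a)>0$; at iteration $k$, $(s_k,a_k)\sim d$ i.i.d., $s_k'\sim P(\cdot|s_k,a_k)$, $r_{k+1}=r(s_k,a_k,s_k')$. SDQ: only entry $(s_k,a_k)$ is updated, $Q_{k+1}^A(s_k,a_k)=Q_k^A(s_k,a_k)+\alpha\{r_{k+1}+\gamma Q_k^A(s_k',\arg\max_aQ_k^B(s_k',a))-Q_k^A(s_k,a_k)\}$ and symmetrically for $B$ with roles of $A,B$ swapped. Vector notation: $Q\in\mathbb{R}^{|\mathcal{S}||\mathcal{A}|}$ stacks $Q(\cdot,1),\dots,Q(\cdot,|\mathcal{A}|)$, so $Q(s,a)=(e_a\otimes e_s)^TQ$. $D$ is the diagonal matrix with entry $d(s,a)$ at position $(s,a)$. $P\in\mathbb{R}^{|\mathcal{S}||\mathcal{A}|\times|\mathcal{S}|}$ has row $(s,a)$ equal to $P(\cdot|s,a)$. $R(s,a)=\mathbb{E}[r(s,a,s')|s,a]$. For $Q$, $\pi_Q(s)=\arg\max_aQ(s,a)$ (fixed tie-breaking) and $\Pi_Q\in\mathbb{R}^{|\mathcal{S}|\times|\mathcal{S}||\mathcal{A}|}$ has $s$-th row $e_{\pi_Q(s)}^T\otimes e_s^T$.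 Noise: $w_k^A=(e_{a_k}\otimes e_{s_k})r_{k+1}+\gamma(e_{a_k}\otimes e_{s_k})e_{s_k'}^T\Pi_{Q_k^B}Q_k^A-(e_{a_k}\otimes e_{s_k})(e_{a_k}\otimes e_{s_k})^TQ_k^A-(DR+\gamma DP\Pi_{Q_k^B}Q_k^A-DQ_k^A)$, and $w_k^B$ is the same with $A$ and $B$ swapped. $|\mathcal{S}\times\mathcal{A}|=|\mathcal{S}||\mathcal{A}|$. *)

(* Defs.v *)
From HB Require Import structures.
From mathcomp Require Import all_boot all_order all_algebra.
From mathcomp Require Import reals.
Set Implicit Arguments. Unset Strict Implicit. Unset Printing Implicit Defensive.
Import Order.TTheory GRing.Theory Num.Theory.
Local Open Scope ring_scope.

Section SDQ.
Variables (R : realType) (S A : finType).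

(* Vectors in R^{|S||A|} are functions on the finite index type S * A;
   the coordinate (s,a) is Q (s,a) = (e_a ⊗ e_s)^T Q. *)
Definition vec := S * A -> R.

(* Transition kernel P(s'|s,a) = P s a s', reward r(s,a,s') = r s a s'. *)
Variables (P : S -> A -> S -> R) (r : S -> A -> S -> R).

Definition Rexp : vec := fun sa => \sum_(s' : S) P sa.1 sa.2 s' * r sa.1 sa.2 s'.

(* D Q : multiplication by the diagonal matrix with entries d(s,a) *)
Definition Dop (d : vec) (V : vec) : vec := fun sa => d sa * V sa.

(* P v : the |S||A| x |S| matrix P applied to v in R^{|S|} *)
Definition Pop (v : S -> R) : vec := fun sa => \sum_(s' : S) P sa.1 sa.2 s' * v s'.

(* Pi_Q V : the |S| x |S||A| matrix Pi_Q (row s = e_{pi_Q(s)}^T ⊗ e_s^T) applied to V *)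
Definition PiOp (pi : vec -> S -> A) (Q : vec) (V : vec) : S -> R :=
  fun s => V (s, pi Q s).

Definition evec (sa : S * A) : vec := fun x => (x == sa)%:R.

(* pi Q s is a greedy action argmax_a Q(s,a), with some fixed tie-breaking rule *)
Definition is_greedy (pi : vec -> S -> A) : Prop :=
  forall (Q : vec) (s : S) (a : A), Q (s, a) <= Q (s, pi Q s).

(* Q* : solution of the Bellman optimality equation
   Q*(s,a) = R(s,a) + gamma * sum_s' P(s'|s,a) max_a' Q*(s',a'),
   written with the greedy selector (Q*(s', pi Q* s') = max_a' Q*(s',a')). *)
Definition is_Qstar (gamma : R) (pi : vec -> S -> A) (Qs : vec) : Prop :=
  forall sa, Qs sa = Rexp sa + gamma * Pop (PiOp pi Qs Qs) sa.

Fixpoint pstep (mu : S -> A) (n : nat) (s s' : S) : R :=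
  match n with
  | 0 => (s == s')%:R
  | n.+1 => \sum_(x : S) P s (mu s) x * pstep mu n x s'
  end.

(* ergodicity: every deterministic stationary policy induces an irreducible chain *)
Definition ergodic : Prop :=
  forall (mu : S -> A) (s s' : S), exists n, 0 < pstep mu n s s'.

Definition is_min (d : vec) (m : R) : Prop :=
  (forall sa, m <= d sa) /\ (exists sa, d sa = m).

Definition norm2 (V : vec) : R := Num.sqrt (\sum_(sa : S * A) V sa ^+ 2).

(* A sample (s_k, a_k, s_k'); the reward is r_{k+1} = r s_k a_k s_k'. *)
Definition sample := (S * A * S)%type.

Variables (d : vec) (gamma alpha : R) (pi : vec -> S -> A) (Qstar : vec).

Definition sdq_step (QA QB : vec) (x : sample) : vec * vec :=
  let: (s, a, s') := x in
  (fun y => QA y + alpha * evec (s, a) y *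
              (r s a s' + gamma * QA (s', pi QB s') - QA (s, a)),
   fun y => QB y + alpha * evec (s, a) y *
              (r s a s' + gamma * QB (s', pi QA s') - QB (s, a))).

(* noise w_k^A = noise Q_k^A Q_k^B x_k,  w_k^B = noise Q_k^B Q_k^A x_k *)
Definition noise (Q1 Q2 : vec) (x : sample) : vec :=
  let: (s, a, s') := x in
  fun y => evec (s, a) y * r s a s'
           + gamma * evec (s, a) y * PiOp pi Q2 Q1 s'
           - evec (s, a) y * Q1 (s, a)
           - (Dop d Rexp y + gamma * Dop d (Pop (PiOp pi Q2 Q1)) y - Dop d Q1 y).

Definition joint_step (st : vec * vec * vec) (x : sample) : vec * vec * vec :=
  let: (QA, QB, Qe) := st in
  let wA := noise QA QB x in
  let wB := noise QB QA x in
  let Qe' : vec := fun y => Qe y + alpha * gamma * Dop d (Pop (PiOp pi Qstar Qe)) y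
                          - alpha * Dop d Qe y + alpha * wA y - alpha * wB y in
  let: (QA', QB') := sdq_step QA QB x in
  (QA', QB', Qe').

Fixpoint run (st : vec * vec * vec) (xs : seq sample) : vec * vec * vec :=
  match xs with
  | [::] => st
  | x :: xs' => run (joint_step st x) xs'
  end.

(* Q_k^{err_UL} as a function of the samples x_0, ..., x_{k-1} *)
Definition QerrUL (QA0 QB0 Qe0 : vec) (xs : seq sample) : vec :=
  (run (QA0, QB0, Qe0) xs).2.

Definition sample_prob (x : sample) : R :=
  let: (s, a, s') := x in d (s, a) * P s a s'.

(* expectation of a function of the first k i.i.d. samples *)
Definition Expect (k : nat) (f : seq sample -> R) : R :=
  \sum_(w : {ffun 'I_k -> sample})
     (\prod_(i : 'I_k) sample_prob (w i)) * f (map w (enum 'I_k)).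

End SDQ.

(* Main.v *)
Require Import Defs.
From HB Require Import structures.
From mathcomp Require Import all_boot all_order all_algebra.
From mathcomp Require Import reals boolp.
From mathcomp Require Import ring lra.
Import Order.TTheory GRing.Theory Num.Theory.
Local Open Scope ring_scope.

Lemma sqrt_le_of (R : realType) (x y : R) : 0 <= y -> x <= y ^+ 2 -> Num.sqrt x <= y.
Proof.
move=> y0 h; rewrite -(ger0_norm y0) -sqrtr_sqr; exact: ler_wsqrtr.
Qed.

Lemma sqrt_addle (R : realType) (a b : R) : 0 <= a -> 0 <= b ->
  Num.sqrt (a + b) <= Num.sqrt a + Num.sqrt b.
Proof.
move=> a0 b0; apply: sqrt_le_of; first by apply: addr_ge0; apply: sqrtr_ge0.
rewrite sqrrD !sqr_sqrtr // -addrA lerD2l lerDr.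
by apply: mulrn_wge0; apply: mulr_ge0; apply: sqrtr_ge0.
Qed.

Lemma le_sqrt_sq (R : realType) (x : R) : x <= Num.sqrt (x ^+ 2).
Proof. by rewrite sqrtr_sqr; apply: ler_norm. Qed.

Lemma nat_le_sq (R : realType) (m : nat) : (m%:R : R) <= m%:R ^+ 2.
Proof.
rewrite -natrX ler_nat; case: m => // m.
by rewrite expnS expn1 leq_pmulr.
Qed.

Section Gen.
Variables (R : realType) (T : finType) (p : T -> R).

Definition EX (k : nat) (f : seq T -> R) : R :=
  \sum_(w : {ffun 'I_k -> T})
     (\prod_(i : 'I_k) p (w i)) * f (map w (enum 'I_k)).

Lemma EX_S k f : EX k.+1 f = \sum_x p x * EX k (fun xs => f (x :: xs)).
Proof.
rewrite /EX.
pose h (xw : T * {ffun 'I_k -> T}) : {ffun 'I_k.+1 -> T} :=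
  [ffun i : 'I_k.+1 => if unlift ord0 i is Some j then xw.2 j else xw.1].
pose h' (w : {ffun 'I_k.+1 -> T}) := (w ord0, [ffun j => w (lift ord0 j)]).
have hK : cancel h' h.
  move=> w; apply/ffunP => i; rewrite /h /h' ffunE /=.
  by case: (unliftP ord0 i) => [j ->|->]; rewrite ?ffunE.
have h'K : cancel h h'.
  move=> [x w]; rewrite /h /h' /= ffunE unlift_none; congr (_, _).
  by apply/ffunP => j; rewrite !ffunE liftK.
rewrite (reindex h) /=; last by exists h' => ? _.
under [RHS]eq_bigr do rewrite mulr_sumr.
rewrite pair_bigA /=; apply: eq_bigr => -[x w] _ /=.
rewrite big_ord_recl enum_ordSl /= /h !ffunE unlift_none /=.
rewrite -map_comp.
under eq_bigr do rewrite ffunE liftK.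
have -> : [seq (fun i => [ffun i0 => match unlift ord0 i0 with
                   | Some j => w j | None => x end] i) (lift ord0 i) | i <- enum 'I_k]
         = map w (enum 'I_k).
  by apply: eq_map => i /=; rewrite ffunE liftK.
by rewrite mulrA.
Qed.

Fixpoint Ep (k : nat) (f : seq T -> R) : R :=
  match k with
  | 0 => f [::]
  | k.+1 => Ep k (fun xs => \sum_x p x * f (rcons xs x))
  end.

Lemma Ep_S_cons k f : Ep k.+1 f = \sum_x p x * Ep k (fun xs => f (x :: xs)).
Proof.
elim: k f => [|k IH] f //.
transitivity (Ep k.+1 (fun xs => \sum_x p x * f (rcons xs x))); first by [].
by rewrite (IH (fun xs => \sum_x p x * f (rcons xs x))).
Qed.

Lemma EX_Ep k f : EX k f = Ep k f.
Proof.
elim: k f => [|k IH] f.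
  rewrite /EX /= enum_ord0 /=.
  under eq_bigr do rewrite big_ord0 mul1r.
  by rewrite sumr_const card_ffun card_ord expn0.
rewrite EX_S Ep_S_cons; apply: eq_bigr => x _; by rewrite IH.
Qed.

Hypothesis p_ge0 : forall x, 0 <= p x.
Hypothesis p_sum1 : \sum_x p x = 1.

Lemma Ep_ext k f g : (forall xs, size xs = k -> f xs = g xs) -> Ep k f = Ep k g.
Proof.
elim: k f g => [|k IH] f g H /=; first by apply: H.
apply: IH => xs Hs; apply: eq_bigr => x _; rewrite H // size_rcons Hs //.
Qed.

Lemma Ep_le k f g : (forall xs, size xs = k -> f xs <= g xs) -> Ep k f <= Ep k g.
Proof.
elim: k f g => [|k IH] f g H /=; first by apply: H.
apply: IH => xs Hs; apply: ler_sum => x _; apply: ler_wpM2l => //.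
by rewrite H // size_rcons Hs //.
Qed.

Lemma Ep_addc k f c : Ep k (fun xs => f xs + c) = Ep k f + c.
Proof.
elim: k f => [|k IH] f //=.
rewrite -IH; apply: Ep_ext => xs _.
under eq_bigr do rewrite mulrDr.
by rewrite big_split /= -mulr_suml p_sum1 mul1r.
Qed.

Lemma var_id (h : T -> R) :
  \sum_x p x * (h x - \sum_y p y * h y) ^+ 2
  = \sum_x p x * h x ^+ 2 - (\sum_y p y * h y) ^+ 2.
Proof.
set m := \sum_y p y * h y.
have E : forall x, p x * (h x - m) ^+ 2 = p x * h x ^+ 2 - (2 * m) * (p x * h x) + m ^+ 2 * p x.
  by move=> x; ring.
under eq_bigr do rewrite E.
rewrite big_split /= sumrB -!mulr_sumr p_sum1 -/m; ring.
Qed.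

Lemma jensen_fin (h : T -> R) : (\sum_x p x * h x) ^+ 2 <= \sum_x p x * h x ^+ 2.
Proof.
rewrite -subr_ge0 -var_id; apply: sumr_ge0 => x _.
by apply: mulr_ge0 => //; apply: sqr_ge0.
Qed.

Lemma Ep_jensen k f : (Ep k f) ^+ 2 <= Ep k (fun xs => f xs ^+ 2).
Proof.
elim: k f => [|k IH] f /=; first by [].
apply: le_trans (IH _) _; apply: Ep_le => xs _; exact: jensen_fin.
Qed.
End Gen.
Arguments Ep {R T}. Arguments EX {R T}. Arguments EX_Ep {R T}.
Arguments Ep_le {R T p} _ {k f g}. Arguments Ep_addc {R T p} _ k f c.
Arguments Ep_jensen {R T p} _ _ k f. Arguments Ep_ext {R T p k f g}.

Section MDP.
Variables (R : realType) (S A : finType).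
Variables (P : S -> A -> S -> R) (r : S -> A -> S -> R) (d : S * A -> R)
    (gamma alpha : R) (pi : (S * A -> R) -> S -> A)
    (Qstar : S * A -> R) (dmin : R).

Definition Mop (V : S * A -> R) : S * A -> R :=
  fun y => V y + alpha * gamma * Dop d (Pop P (PiOp pi Qstar V)) y - alpha * Dop d V y.

Definition Mpow j V := iter j Mop V.

Lemma Mop_add U V c :
  Mop (fun y => U y + c * V y) = (fun y => Mop U y + c * Mop V y).
Proof.
apply: funext => y; rewrite /Mop /Dop /Pop /PiOp.
under eq_bigr do rewrite mulrDr mulrCA.
rewrite big_split /= -mulr_sumr; ring.
Qed.

Lemma Mpow_add j U V c :
  Mpow j (fun y => U y + c * V y) = (fun y => Mpow j U y + c * Mpow j V y).
Proof.
elim: j => [|j IH] //=; rewrite /Mpow /= in IH *.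
by rewrite IH Mop_add.
Qed.

Lemma Mop_sum (I : finType) (q : I -> R) (V : I -> S * A -> R) :
  Mop (fun y => \sum_i q i * V i y) = (fun y => \sum_i q i * Mop (V i) y).
Proof.
apply: funext => y; rewrite /Mop /Dop /Pop /PiOp.
have E : forall i, q i * (V i y + alpha * gamma * (d y * (\sum_s' P y.1 y.2 s' * V i (s', pi Qstar s')))
             - alpha * (d y * V i y))
   = q i * V i y + alpha * gamma * d y * (\sum_s' P y.1 y.2 s' * (q i * V i (s', pi Qstar s')))
     - alpha * d y * (q i * V i y).
  move=> i.
  have -> : \sum_s' P y.1 y.2 s' * (q i * V i (s', pi Qstar s')) = q i * \sum_s' P y.1 y.2 s' * V i (s', pi Qstar s').
    by rewrite mulr_sumr; apply: eq_bigr => s' _; rewrite mulrCA.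
  ring.
under [RHS]eq_bigr do rewrite E.
rewrite sumrB big_split /= -!mulr_sumr.
rewrite [in RHS]exchange_big /=.
suff -> : \sum_s' P y.1 y.2 s' * (\sum_i q i * V i (s', pi Qstar s')) = \sum_j \sum_i P y.1 y.2 j * (q i * V i (j, pi Qstar j)) by ring.
by apply: eq_bigr => s' _; rewrite mulr_sumr.
Qed.

Lemma Mpow_sum j (I : finType) (q : I -> R) (V : I -> S * A -> R) :
  Mpow j (fun y => \sum_i q i * V i y) = (fun y => \sum_i q i * Mpow j (V i) y).
Proof.
elim: j => [|j IH] //=; rewrite /Mpow /= in IH *.
by rewrite IH Mop_sum.
Qed.

Hypothesis P_ge0 : forall s a s', 0 <= P s a s'.
Hypothesis P_sum1 : forall s a, \sum_(s' : S) P s a s' = 1.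
Hypothesis gamma01 : 0 < gamma < 1.
Hypothesis alpha01 : 0 < alpha < 1.
Hypothesis d_gt0 : forall sa, 0 < d sa.
Hypothesis d_le1 : forall sa, d sa <= 1.
Hypothesis dmin_le : forall sa, dmin <= d sa.
Hypothesis dmin_gt0 : 0 < dmin.

Definition rho := 1 - alpha * dmin * (1 - gamma).

Lemma Mop_bound V c : (forall z, `|V z| <= c) -> forall y, `|Mop V y| <= rho * c.
Proof.
move=> H y.
have c0 : 0 <= c := le_trans (normr_ge0 _) (H y).
set Sm := \sum_s' P y.1 y.2 s' * V (s', pi Qstar s').
have hS : `|Sm| <= c.
  apply: le_trans (ler_norm_sum _ _ _) _.
  rewrite -[c]mul1r -(P_sum1 y.1 y.2) mulr_suml; apply: ler_sum => s' _.
  by rewrite normrM (ger0_norm (P_ge0 _ _ _)); apply: ler_wpM2l.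
have -> : Mop V y = (1 - alpha * d y) * V y + (alpha * gamma * d y) * Sm.
  by rewrite /Mop /Dop /Pop /PiOp -/Sm; ring.
case/andP: gamma01 => g0 g1; case/andP: alpha01 => a0 a1.
have dy0 := d_gt0 y; have dy1 := d_le1 y; have dm := dmin_le y.
have h1 : 0 <= 1 - alpha * d y by nra.
have h2 : 0 <= alpha * gamma * d y by apply: mulr_ge0 => //; nra.
apply: le_trans (ler_normD _ _) _; rewrite normrM (ger0_norm h1) normrM (ger0_norm h2).
have hV := H y.
have e1 : 0 <= (1 - alpha * d y) * (c - `|V y|) by apply: mulr_ge0; lra.
have e2 : 0 <= (alpha * gamma * d y) * (c - `|Sm|) by apply: mulr_ge0; [nra|lra].
have e3 : 0 <= (alpha * (1 - gamma)) * ((d y - dmin) * c) by apply: mulr_ge0; [nra|apply: mulr_ge0; lra].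
rewrite /rho; nra.
Qed.

Lemma rho_ge0 : dmin <= 1 -> 0 <= rho.
Proof.
case/andP: gamma01 => g0 g1; case/andP: alpha01 => a0 a1 h.
have h0 := dmin_gt0.
have h1 : alpha * dmin <= 1 by nra.
have h2 : 0 <= alpha * dmin by nra.
rewrite /rho; nra.
Qed.

Lemma sum_ind (I : finType) (i0 : I) (F : I -> R) : \sum_i (i0 == i)%:R * F i = F i0.
Proof.
rewrite (bigD1 i0) //= eqxx mul1r big1 ?addr0 // => i /negbTE.
by rewrite eq_sym => ->; rewrite mul0r.
Qed.

Definition X1 (Q1 Q2 : S * A -> R) (x : sample S A) : S * A -> R :=
  let: (s, a, s') := x in
  fun y => evec R (s, a) y * (r s a s' + gamma * Q1 (s', pi Q2 s') - Q1 (s, a)).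

Definition pr := sample_prob P d.

Lemma sum_sample (F : sample S A -> R) :
  \sum_x F x = \sum_(sa : S * A) \sum_(s' : S) F (sa, s').
Proof. by rewrite pair_bigA; apply: eq_bigr => -[[s a] s'] _. Qed.

Lemma X1_mean Q1 Q2 y : \sum_x pr x * X1 Q1 Q2 x y =
  Dop d (Rexp P r) y + gamma * Dop d (Pop P (PiOp pi Q2 Q1)) y - Dop d Q1 y.
Proof.
rewrite sum_sample.
pose G (sa : S * A) := d sa * \sum_s' P sa.1 sa.2 s' * (r sa.1 sa.2 s' + gamma * Q1 (s', pi Q2 s') - Q1 sa).
transitivity (\sum_sa (y == sa)%:R * G sa).
  apply: eq_bigr => -[s a] _; rewrite /G /= mulr_sumr mulr_sumr; apply: eq_bigr => s' _.
  rewrite /pr /X1 /evec /=; ring.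
rewrite sum_ind /G /Dop /Rexp /Pop /PiOp.
under eq_bigr do rewrite !mulrDr mulrN.
rewrite sumrB big_split /= -mulr_suml P_sum1.
have -> : \sum_i P y.1 y.2 i * (gamma * Q1 (i, pi Q2 i)) = gamma * \sum_i P y.1 y.2 i * Q1 (i, pi Q2 i).
  by rewrite mulr_sumr; apply: eq_bigr => i _; rewrite mulrCA.
ring.
Qed.

Lemma noise_center Q1 Q2 x y :
  noise P r d gamma pi Q1 Q2 x y = X1 Q1 Q2 x y - \sum_x' pr x' * X1 Q1 Q2 x' y.
Proof.
rewrite X1_mean; case: x => [[s a] s'] /=; rewrite /X1 /PiOp; ring.
Qed.

Lemma Mpow_bound j V c : 0 <= rho -> (forall z, `|V z| <= c) -> forall y, `|Mpow j V y| <= rho ^+ j * c.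
Proof.
move=> r0 H; elim: j => [|j IH] y; first by rewrite expr0 mul1r; apply: H.
rewrite exprS -mulrA; exact: (Mop_bound _ _ IH y).
Qed.

Hypothesis d_sum1 : \sum_sa d sa = 1.

Lemma pr_ge0 x : 0 <= pr x.
Proof. case: x => [[s a] s'] /=; rewrite /pr /=; apply: mulr_ge0 => //; exact: ltW. Qed.

Lemma pr_sum1 : \sum_x pr x = 1.
Proof.
rewrite sum_sample -d_sum1; apply: eq_bigr => -[s a] _.
rewrite -[d (s, a)]mulr1 -(P_sum1 s a) mulr_sumr; apply: eq_bigr => s' _ //.
Qed.

Lemma sq_le (a b : R) : `|a| <= b -> a ^+ 2 <= b ^+ 2.
Proof. rewrite ler_norml => /andP [h1 h2]; nra. Qed.

Lemma sum_ind' (I : finType) (i0 : I) (F : I -> R) : \sum_i (i == i0)%:R * F i = F i0.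
Proof. rewrite -[RHS](sum_ind _ i0); apply: eq_bigr => i _; by rewrite eq_sym. Qed.

Definition W QA QB x y := noise P r d gamma pi QA QB x y - noise P r d gamma pi QB QA x y.

Lemma W_center QA QB x y :
  W QA QB x y = (X1 QA QB x y - X1 QB QA x y)
                - \sum_x' pr x' * (X1 QA QB x' y - X1 QB QA x' y).
Proof.
rewrite /W !noise_center.
under [X in _ = _ - X]eq_bigr do rewrite mulrBr.
rewrite sumrB; ring.
Qed.

Lemma W_mean QA QB y : \sum_x pr x * W QA QB x y = 0.
Proof.
under eq_bigr do rewrite W_center mulrBr.
by rewrite sumrB -mulr_suml pr_sum1 mul1r subrr.
Qed.

Lemma W_var QA QB B :
  (forall z, `|QA z| <= B) -> (forall z, `|QB z| <= B) ->
  \sum_x pr x * (\sum_y W QA QB x y ^+ 2) <= 16 * B ^+ 2.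
Proof.
move=> HA HB.
pose D x y := X1 QA QB x y - X1 QB QA x y.
under eq_bigr do rewrite mulr_sumr.
rewrite exchange_big /=.
under eq_bigr do under eq_bigr do rewrite W_center -/(D _ _).
under eq_bigr do rewrite (@var_id _ _ pr pr_sum1 (fun x => D x _)).
apply: le_trans (_ : \sum_y \sum_x pr x * D x y ^+ 2 <= _).
  apply: ler_sum => y _; rewrite lerBlDr lerDl; exact: sqr_ge0.
rewrite exchange_big /=.
apply: le_trans (_ : _ <= \sum_x pr x * (16 * B ^+ 2)) _; last first.
  by rewrite -mulr_suml pr_sum1 mul1r.
apply: ler_sum => x _.
rewrite -mulr_sumr; apply: ler_wpM2l; first exact: pr_ge0.
case: x => [[s a] s'].
set Z := gamma * (QA (s', pi QB s') - QB (s', pi QA s')) - (QA (s, a) - QB (s, a)).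
have -> : \sum_y D (s, a, s') y ^+ 2 = Z ^+ 2.
  rewrite -(sum_ind' _ (s, a) (fun _ => Z ^+ 2)); apply: eq_bigr => y _.
  rewrite /D /X1 /evec /Z; case: (y == (s, a)) => /=; ring.
have hB : 0 <= B := le_trans (normr_ge0 _) (HA (s, a)).
have := HA (s', pi QB s'); have := HB (s', pi QA s'); have := HA (s, a); have := HB (s, a).
rewrite !ler_norml => /andP[h1 h2] /andP[h3 h4] /andP[h5 h6] /andP[h7 h8].
case/andP: gamma01 => g0 g1.
have hZ : `|Z| <= 4 * B.
  rewrite ler_norml /Z; apply/andP; split; nra.
have := sq_le _ _ hZ; have -> : (4 * B) ^+ 2 = 16 * B ^+ 2 by ring.
by [].
Qed.

Lemma Mpow0 j y : 0 <= rho -> Mpow j (fun _ => 0) y = 0.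
Proof.
move=> r0; apply/eqP; rewrite -normr_le0.
have := Mpow_bound j (fun _ => 0) 0 r0; rewrite mulr0; apply => z.
by rewrite normr0.
Qed.

Lemma sq_le_sum (V : S * A -> R) z : V z ^+ 2 <= \sum_y V y ^+ 2.
Proof.
rewrite (bigD1 z) //= lerDl; apply: sumr_ge0 => y _; exact: sqr_ge0.
Qed.

Lemma Mpow_sq j V y : 0 <= rho ->
  Mpow j V y ^+ 2 <= (rho ^+ 2) ^+ j * \sum_z V z ^+ 2.
Proof.
move=> r0.
have s0 : 0 <= \sum_z V z ^+ 2 by apply: sumr_ge0 => z _; exact: sqr_ge0.
have H : forall z, `|V z| <= Num.sqrt (\sum_z V z ^+ 2).
  by move=> z; rewrite -sqrtr_sqr; apply: ler_wsqrtr; apply: sq_le_sum.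
have := sq_le _ _ (Mpow_bound j V _ r0 H y).
by rewrite exprMn sqr_sqrtr // -exprM mulnC exprM.
Qed.

Lemma step_bound QA QB B U j :
  (forall z, `|QA z| <= B) -> (forall z, `|QB z| <= B) -> 0 <= rho ->
  \sum_x pr x * (\sum_y (U y + alpha * Mpow j (W QA QB x) y) ^+ 2)
   <= \sum_y U y ^+ 2 + alpha ^+ 2 * (#|{: S * A}|%:R * (rho ^+ 2) ^+ j * (16 * B ^+ 2)).
Proof.
move=> HA HB r0.
have M0 : forall y, \sum_x pr x * Mpow j (W QA QB x) y = 0.
  move=> y.
  have := congr1 (fun f => f y) (Mpow_sum j _ pr (fun x => W QA QB x)) => /= <-.
  have -> : (fun y => \sum_x pr x * W QA QB x y) = (fun _ => 0).
    by apply: funext => z; apply: W_mean.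
  exact: Mpow0.
under eq_bigr do rewrite mulr_sumr.
rewrite exchange_big /=.
have E : forall y, \sum_x pr x * (U y + alpha * Mpow j (W QA QB x) y) ^+ 2
   = U y ^+ 2 + alpha ^+ 2 * \sum_x pr x * Mpow j (W QA QB x) y ^+ 2.
  move=> y.
  have E1 : forall x, pr x * (U y + alpha * Mpow j (W QA QB x) y) ^+ 2
     = U y ^+ 2 * pr x + (2 * alpha * U y) * (pr x * Mpow j (W QA QB x) y)
       + alpha ^+ 2 * (pr x * Mpow j (W QA QB x) y ^+ 2).
    by move=> x; ring.
  under eq_bigr do rewrite E1.
  rewrite !big_split /= -!mulr_sumr M0 pr_sum1; ring.
under eq_bigr do rewrite E.
rewrite big_split /= lerD2l -mulr_sumr; apply: ler_wpM2l; first exact: sqr_ge0.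
apply: le_trans (_ : _ <= \sum_(y : S * A) (rho ^+ 2) ^+ j * (16 * B ^+ 2)) _; last first.
  by rewrite sumr_const -[X in X <= _]mulr_natl mulrA.
apply: ler_sum => y _.
apply: le_trans (_ : _ <= \sum_x pr x * ((rho ^+ 2) ^+ j * \sum_z W QA QB x z ^+ 2)) _.
  apply: ler_sum => x _; apply: ler_wpM2l; [exact: pr_ge0 | exact: Mpow_sq].
under eq_bigr do rewrite mulrCA.
rewrite -mulr_sumr; apply: ler_wpM2l; first by apply: exprn_ge0; exact: sqr_ge0.
exact: W_var.
Qed.

Hypothesis r_bd : forall s a s', `|r s a s'| <= 1.

Lemma run_rcons st xs x :
  run P r d gamma alpha pi Qstar st (rcons xs x) = joint_step P r d gamma alpha pi Qstar (run P r d gamma alpha pi Qstar st xs) x.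
Proof. by elim: xs st => [|y xs IH] st //=. Qed.

Lemma joint_step_Qe QA QB Qe x :
  (joint_step P r d gamma alpha pi Qstar (QA, QB, Qe) x).2 = (fun y => Mop Qe y + alpha * W QA QB x y).
Proof.
apply: funext => y; case: x => [[s a] s'] /=; rewrite /Mop /W /noise; ring.
Qed.

Lemma joint_step_AB QA QB Qe x :
  (joint_step P r d gamma alpha pi Qstar (QA, QB, Qe) x).1 = sdq_step r gamma alpha pi QA QB x.
Proof. by case: x => [[s a] s']. Qed.

Definition Bq := (1 - gamma)^-1.

Lemma Bq_ge1 : 1 <= Bq.
Proof.
case/andP: gamma01 => g0 g1; rewrite /Bq; rewrite -invr1 lef_pV2 ?posrE; lra.
Qed.

Lemma upd_bound (Q1 Q2 : S * A -> R) s a s' y :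
  (forall z, `|Q1 z| <= Bq) ->
  `|Q1 y + alpha * evec R (s, a) y * (r s a s' + gamma * Q1 (s', pi Q2 s') - Q1 (s, a))| <= Bq.
Proof.
move=> H; rewrite /evec; case: eqP => [->|_]; last by rewrite mulr0 mul0r addr0.
rewrite mulr1.
have hB : Bq * (1 - gamma) = 1.
  case/andP: gamma01 => g0 g1; rewrite /Bq mulVf //; lra.
case/andP: gamma01 => g0 g1; case/andP: alpha01 => a0 a1.
have := H (s, a); have := H (s', pi Q2 s'); have := r_bd s a s'.
rewrite !ler_norml => /andP[h1 h2] /andP[h3 h4] /andP[h5 h6].
have e1 : 0 <= (1 - alpha) * (Bq - Q1 (s, a)) by apply: mulr_ge0; lra.
have e2 : 0 <= (1 - alpha) * (Bq + Q1 (s, a)) by apply: mulr_ge0; lra.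
have e3 : 0 <= alpha * (1 - r s a s') by apply: mulr_ge0; lra.
have e4 : 0 <= alpha * (1 + r s a s') by apply: mulr_ge0; lra.
have e5 : 0 <= alpha * gamma * (Bq - Q1 (s', pi Q2 s')) by apply: mulr_ge0; [apply: mulr_ge0|]; lra.
have e6 : 0 <= alpha * gamma * (Bq + Q1 (s', pi Q2 s')) by apply: mulr_ge0; [apply: mulr_ge0|]; lra.
have e7 : alpha * (Bq * (1 - gamma)) = alpha by rewrite hB mulr1.
apply/andP; split; lra.
Qed.

Lemma run_bound st xs :
  (forall z, `|st.1.1 z| <= Bq) -> (forall z, `|st.1.2 z| <= Bq) ->
  (forall z, `|(run P r d gamma alpha pi Qstar st xs).1.1 z| <= Bq) /\
  (forall z, `|(run P r d gamma alpha pi Qstar st xs).1.2 z| <= Bq).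
Proof.
elim: xs st => [|x xs IH] [[QA QB] Qe] /= HA HB; first by split.
apply: IH; rewrite joint_step_AB; case: x => [[s a] s'] /= z; exact: upd_bound.
Qed.

Lemma main_sec (QA0 QB0 Qe0 : S * A -> R) k :
  (forall sa, `|QA0 sa| <= 1) -> (forall sa, `|QB0 sa| <= 1) -> dmin <= 1 ->
  Expect P d k (fun xs => norm2 (QerrUL P r d gamma alpha pi Qstar QA0 QB0 Qe0 xs))
    <= 4 * Num.sqrt alpha * #|{: S * A}|%:R
         / (Num.sqrt dmin * Num.sqrt ((1 - gamma) ^+ 3))
       + #|{: S * A}|%:R * norm2 Qe0 * (1 - alpha * dmin * (1 - gamma)) ^+ k.
Proof.
move=> HA0 HB0 dm1.
have r0 : 0 <= rho := rho_ge0 dm1.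
case/andP: gamma01 => g0 g1; case/andP: alpha01 => a0 a1.
have adg : 0 < alpha * dmin * (1 - gamma).
  apply: mulr_gt0; last by rewrite subr_gt0.
  by apply: mulr_gt0.
have r1 : rho < 1 by rewrite /rho; lra.
set q := rho ^+ 2.
have q0 : 0 <= q by apply: sqr_ge0.
have q1 : alpha * dmin * (1 - gamma) <= 1 - q.
  have h := mulr_ge0 (ltW adg) r0; rewrite /q /rho in h *.
  set t := alpha * dmin * (1 - gamma) in h *; nra.
have q1' : 0 < 1 - q by lra.
set n : R := #|{: S * A}|%:R.
have n0 : 0 <= n by apply: ler0n.
set K := 16 * Bq ^+ 2.
have K0 : 0 <= K by apply: mulr_ge0; [lra | apply: sqr_ge0].
set st0 := (QA0, QB0, Qe0).
set Z := \sum_y Mpow k Qe0 y ^+ 2.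
pose Y xs := Mpow (k - size xs) (run P r d gamma alpha pi Qstar st0 xs).2.
have HAB : forall xs, (forall z, `|(run P r d gamma alpha pi Qstar st0 xs).1.1 z| <= Bq) /\
                      (forall z, `|(run P r d gamma alpha pi Qstar st0 xs).1.2 z| <= Bq).
  move=> xs; apply: run_bound => z /=.
    exact: le_trans (HA0 z) Bq_ge1.
  exact: le_trans (HB0 z) Bq_ge1.
have claim : forall k0, (k0 <= k)%N ->
  Ep pr k0 (fun xs => \sum_y Y xs y ^+ 2)
    <= Z + alpha ^+ 2 * (n * q ^+ (k - k0) * K) / (1 - q).
  elim => [_|k0 IH lt].
    rewrite /= /Y /= subn0 -/Z lerDl; apply: divr_ge0; last lra.
    apply: mulr_ge0; first exact: sqr_ge0.
    by apply: mulr_ge0 => //; apply: mulr_ge0 => //; apply: exprn_ge0.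
  have lt' : (k0 < k)%N by [].
  have IH' := IH (ltnW lt').
  rewrite [Ep _ _ _]/=.
  apply: le_trans (Ep_le pr_ge0 (g := fun xs => \sum_y Y xs y ^+ 2 + alpha ^+ 2 * (n * q ^+ (k - k0.+1) * K)) _) _.
    move=> xs Hs.
    have := HAB xs; rewrite /Y.
    case Erun: (run P r d gamma alpha pi Qstar st0 xs) => [[QA QB] Qe] /= [HA HB].
    rewrite Hs.
    have E : forall x, \sum_y Mpow (k - size (rcons xs x)) (run P r d gamma alpha pi Qstar st0 (rcons xs x)).2 y ^+ 2
       = \sum_y (Mpow (k - k0) Qe y + alpha * Mpow (k - k0.+1) (W QA QB x) y) ^+ 2.
      move=> x; rewrite size_rcons Hs run_rcons Erun joint_step_Qe Mpow_add.
      have -> : Mpow (k - k0.+1) (Mop Qe) = Mpow (k - k0) Qe by rewrite /Mpow -iterSr subnSK.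
      by [].
    under eq_bigr do rewrite E.
    exact: step_bound.
  rewrite (Ep_addc pr_sum1).
  apply: le_trans (lerD IH' (lexx _)) _.
  rewrite -(subnSK lt') (exprS q) -addrA lerD2l.
  rewrite le_eqVlt; apply/orP; left; apply/eqP; field.
  by rewrite gt_eqF.
have e1 : Expect P d k (fun xs => norm2 (QerrUL P r d gamma alpha pi Qstar QA0 QB0 Qe0 xs))
   = Ep pr k (fun xs => norm2 (run P r d gamma alpha pi Qstar st0 xs).2).
  by rewrite -EX_Ep.
rewrite e1.
set F := fun xs => norm2 (run P r d gamma alpha pi Qstar st0 xs).2.
apply: le_trans (le_sqrt_sq _ _) _.
apply: le_trans (ler_wsqrtr (Ep_jensen pr_ge0 pr_sum1 k F)) _.
have e2 : Ep pr k (fun xs => F xs ^+ 2) = Ep pr k (fun xs => \sum_y Y xs y ^+ 2).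
  apply: Ep_ext => xs Hs; rewrite /F /Y Hs subnn /norm2 sqr_sqrtr //.
  by apply: sumr_ge0 => y _; exact: sqr_ge0.
rewrite e2.
apply: le_trans (ler_wsqrtr (claim k (leqnn k))) _.
rewrite subnn expr0 mulr1.
have Z0 : 0 <= Z by apply: sumr_ge0 => y _; exact: sqr_ge0.
have T0 : 0 <= alpha ^+ 2 * (n * K) / (1 - q).
  by apply: divr_ge0; [apply: mulr_ge0; [apply: sqr_ge0 | apply: mulr_ge0] | lra].
apply: le_trans (sqrt_addle _ _ _ Z0 T0) _.
rewrite addrC; apply: lerD.
  have gg : 0 < 1 - gamma by lra.
  have dm0 := dmin_gt0.
  apply: sqrt_le_of.
    apply: divr_ge0; first by apply: mulr_ge0 => //; apply: mulr_ge0; [lra | apply: sqrtr_ge0].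
    by apply: mulr_ge0; apply: sqrtr_ge0.
  have Y2 : (4 * Num.sqrt alpha * n / (Num.sqrt dmin * Num.sqrt ((1 - gamma) ^+ 3))) ^+ 2
      = 16 * alpha * n ^+ 2 / (dmin * (1 - gamma) ^+ 3).
    rewrite expr_div_n !exprMn (sqr_sqrtr (ltW a0)) (sqr_sqrtr (ltW dm0)) sqr_sqrtr; last first.
      by apply: exprn_ge0; lra.
    ring.
  rewrite Y2 ler_pdivrMr //.
  have c0 : 0 <= 16 * alpha * n ^+ 2 / (dmin * (1 - gamma) ^+ 3).
    apply: divr_ge0; first by apply: mulr_ge0; [apply: mulr_ge0; lra | apply: sqr_ge0].
    by apply: mulr_ge0; [lra | apply: exprn_ge0; lra].
  apply: le_trans (_ : _ <= 16 * alpha ^+ 2 * n ^+ 2 * Bq ^+ 2) _.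
    have -> : alpha ^+ 2 * (n * K) = (16 * alpha ^+ 2 * Bq ^+ 2) * n by rewrite /K; ring.
    have -> : 16 * alpha ^+ 2 * n ^+ 2 * Bq ^+ 2 = (16 * alpha ^+ 2 * Bq ^+ 2) * n ^+ 2 by ring.
    apply: ler_wpM2l; last exact: nat_le_sq.
    by apply: mulr_ge0; [apply: mulr_ge0; [lra | apply: sqr_ge0] | apply: sqr_ge0].
  have -> : 16 * alpha ^+ 2 * n ^+ 2 * Bq ^+ 2
     = (16 * alpha * n ^+ 2 / (dmin * (1 - gamma) ^+ 3)) * (alpha * dmin * (1 - gamma)).
    rewrite /Bq; field; apply/andP; split; by rewrite gt_eqF.
  exact: ler_wpM2l.
set S0 := \sum_z Qe0 z ^+ 2.
have S00 : 0 <= S0 by apply: sumr_ge0 => y _; exact: sqr_ge0.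
have HZ : Z <= n * (q ^+ k * S0).
  apply: le_trans (_ : _ <= \sum_(y : S * A) q ^+ k * S0) _.
    apply: ler_sum => y _; exact: Mpow_sq.
  by rewrite sumr_const -[X in X <= _]mulr_natl.
rewrite -[1 - alpha * dmin * (1 - gamma)]/rho.
apply: sqrt_le_of.
  apply: mulr_ge0; last by apply: exprn_ge0.
  by apply: mulr_ge0 => //; apply: sqrtr_ge0.
apply: le_trans HZ _.
have -> : (n * Num.sqrt S0 * rho ^+ k) ^+ 2 = n ^+ 2 * (q ^+ k * S0).
  have hx : (rho ^+ k) ^+ 2 = q ^+ k by rewrite /q -!exprM mulnC.
  by rewrite ![in LHS]exprMn sqr_sqrtr // hx -mulrA (mulrC S0).
apply: ler_wpM2r; last exact: nat_le_sq.
by apply: mulr_ge0 => //; apply: exprn_ge0.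
Qed.
End MDP.

Theorem lemma7 (R : realType) (S A : finType)
    (P : S -> A -> S -> R) (r : S -> A -> S -> R) (d : S * A -> R)
    (gamma alpha : R) (pi : (S * A -> R) -> S -> A)
    (Qstar QA0 QB0 Qe0 : S * A -> R) (dmin : R) :
  (forall s a s', 0 <= P s a s') ->
  (forall s a, \sum_(s' : S) P s a s' = 1) ->
  ergodic P ->
  (forall s a s', `|r s a s'| <= 1) ->
  0 < gamma < 1 ->
  0 < alpha < 1 ->
  (forall sa, 0 < d sa) ->
  \sum_(sa : S * A) d sa = 1 ->
  is_greedy pi ->
  is_Qstar P r gamma pi Qstar ->
  (forall sa, `|QA0 sa| <= 1) ->
  (forall sa, `|QB0 sa| <= 1) ->
  is_min d dmin ->
  forall k : nat,
    Expect P d k (fun xs => norm2 (QerrUL P r d gamma alpha pi Qstar QA0 QB0 Qe0 xs))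
    <= 4 * Num.sqrt alpha * #|{: S * A}|%:R
         / (Num.sqrt dmin * Num.sqrt ((1 - gamma) ^+ 3))
       + #|{: S * A}|%:R * norm2 Qe0 * (1 - alpha * dmin * (1 - gamma)) ^+ k.
Proof.
move=> HP0 HP1 _ Hr Hg Ha Hd Hdsum _ _ HA HB [Hmin [sa0 Hsa0]] k.
have d_le1 : forall sa, d sa <= 1.
  move=> sa; rewrite -Hdsum (bigD1 sa) //= lerDl; apply: sumr_ge0 => i _; exact: ltW.
have dm0 : 0 < dmin by rewrite -Hsa0.
have dm1 : dmin <= 1 by rewrite -Hsa0.
exact: (main_sec _ _ _ _ _ _ _ _ _ _ _ HP0 HP1 Hg Ha Hd d_le1 Hmin dm0 Hdsum Hr QA0 QB0 Qe0 k HA HB dm1).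
Qed.
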